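(* Consider the convex problem $\mathcal{P}_n$ described in the context, and let $(\mathbf{V}_0^\ast,\{\mathbf{V}_k^\ast\},\boldsymbol{\Lambda}^\ast,\dots,\omega^\ast)$ be an optimal solution together with optimal Lagrange multipliers satisfying the KKT conditions (K2), (K4), (K5) of the context with $\psi_4^{k\ast}>0$. If $\mathrm{rank}(\mathbf{V}_k^\ast)>1$ for some $k\in\mathcal{K}$, then there exists a rank-one positive semidefinite matrix $\hat{\mathbf{V}}_k$ with $\mathbf{V}_k^\ast-\hat{\mathbf{V}}_k\succeq 0$ such that the point obtained from the optimal solution by replacing $\mathbf{V}_k^\ast$ with $\hat{\mathbf{V}}_k$ and $\boldsymbol{\Lambda}^\ast$ with $\hat{\boldsymbol{\Lambda}}=\boldsymbol{\Lambda}^\ast+(\mathbf{V}_k^\ast-\hat{\mathbf{V}}_k)$ (keeping $\mathbf{V}_0^\ast$ and all other variables unchanged) is feasible for $\mathcal{P}_n$ and attains the same objective value; here $\mathbf{V}_k^\ast-\hat{\mathbf{V}}_k$ is a nonnegative combination of projections onto an orthonormal basis of the null space of $\mathbf{Y}_k^\ast$ (the matrix $\mathbf{Y}_k$ evaluated at the optimal multipliers).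
   Context: Setting. Let $N,L,K,Z$ be positive integers and write $\mathcal{L}=\{1,\dots,L\}$, $\mathcal{K}=\{1,\dots,K\}$, $\mathcal{Z}=\{1,\dots,Z\}$. Given are row vectors $\mathbf{g}_l\in\mathbb{C}^{1\times N}$ ($l\in\mathcal{L}$; fronthaul channels from an $N$-antenna central processor to $L$ base stations), $\bar{\mathbf{h}}_k\in\mathbb{C}^{1\times L}$ ($k\in\mathcal{K}$; equivalent user channels) and $\bar{\mathbf{h}}^{e}_z\in\mathbb{C}^{1\times L}$ ($z\in\mathcal{Z}$; equivalent eavesdropper channels). Set $\mathbf{G}_l=\mathbf{g}_l^H\mathbf{g}_l$, $\bar{\mathbf{H}}_k=\bar{\mathbf{h}}_k^H\bar{\mathbf{h}}_k$, $\bar{\mathbf{H}}^e_z=(\bar{\mathbf{h}}^e_z)^H\bar{\mathbf{h}}^e_z$. Given are positive constants $W_{mm},W_{mc},N_0,P^{BS}_{\max},P^{AC}_{\max}$, $\eta=W_{mc}/W_{mm}$, and iteration constants $\beta_k^{[n]}>0$, $\varepsilon_k^{[n]}>0$, $\lambda_k^{[n]}\in\mathbb{R}$, $\tau_k^{[n]}>-1$ ($k\in\mathcal{K}$), $\mu_k^{z[n]}\in\mathbb{R}$, $\gamma_k^{z[n]}>-1$ ($k\in\mathcal{K},z\in\mathcal{Z}$). All logarithms are natural. Problem $\mathcal{P}_n$ (the rank-relaxed convex subproblem at iteration $n$). Variables: Hermitian $\mathbf{V}_0\in\mathbb{C}^{N\times N}$, Hermitian $\mathbf{V}_k\in\mathbb{C}^{L\times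 L}$ ($k\in\mathcal{K}$), Hermitian $\boldsymbol{\Lambda}\in\mathbb{C}^{L\times L}$, and real scalars $\varepsilon_k,\beta_k,\tau_k,\theta_k,\lambda_k$ ($k\in\mathcal{K}$), $\gamma_k^z,\zeta_k^z,\mu_k^z$ ($k\in\mathcal{K},z\in\mathcal{Z}$), $\omega$. Objective (to maximize): $\sum_{k=1}^K W_{mm}\big[\log(1+\beta_k)-\log(1+\gamma_k^{z[n]})-\frac{\gamma_k^z-\gamma_k^{z[n]}}{1+\gamma_k^{z[n]}}\big]$, which depends only on the scalar variables $\beta_k,\gamma_k^z$. Constraints, for all $k\in\mathcal{K}$, $z\in\mathcal{Z}$, $l\in\mathcal{L}$: (C1) $\sum_{k=1}^K\mathrm{Tr}(\mathbf{V}_k)+\mathrm{Tr}(\boldsymbol{\Lambda})\le P^{BS}_{\max}$; (C2) $\mathrm{Tr}(\mathbf{V}_0)\le P^{AC}_{\max}$; (C3) $\mathbf{V}_0\succeq 0$, $\mathbf{V}_k\succeq 0$, $\boldsymbol{\Lambda}\succeq 0$; (C4) $\varepsilon_k\ge\sum_{i\ne k}\mathrm{Tr}(\bar{\mathbf{H}}_k\mathbf{V}_i)+\mathrm{Tr}(\bar{\mathbf{H}}_k\boldsymbol{\Lambda})+W_{mm}N_0$; (C5) $\frac{\beta_k^{[n]}}{2\varepsilon_k^{[n]}}\varepsilon_k^2+\frac{\varepsilon_k^{[n]}}{2\beta_k^{[n]}}\beta_k^2\le\mathrm{Tr}(\bar{\mathbf{H}}_k\mathbf{V}_k)$; (C6)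 $\mathrm{Tr}(\bar{\mathbf{H}}^e_z\mathbf{V}_k)-\gamma_k^zW_{mm}N_0\le\zeta_k^z$; (C7) $\zeta_k^z\le 2\mu_k^{z[n]}\mu_k^z-(\mu_k^{z[n]})^2$; (C8) $\begin{bmatrix}\gamma_k^z&\mu_k^z\\ \mu_k^z&\sum_{i\ne k}\mathrm{Tr}(\bar{\mathbf{H}}^e_z\mathbf{V}_i)+\mathrm{Tr}(\bar{\mathbf{H}}^e_z\boldsymbol{\Lambda})\end{bmatrix}\succeq 0$; (C9) $\mathrm{Tr}(\mathbf{G}_l\mathbf{V}_0)\ge W_{mc}N_0(e^{\omega/\eta}-1)$ (equivalently $\omega\le\eta\log(1+\mathrm{Tr}(\mathbf{G}_l\mathbf{V}_0)/(W_{mc}N_0))$); (C10) $\mathrm{Tr}(\bar{\mathbf{H}}_k\mathbf{V}_k)-\tau_kW_{mm}N_0\le\theta_k$; (C11) $\theta_k\le 2\lambda_k^{[n]}\lambda_k-(\lambda_k^{[n]})^2$; (C12) $\begin{bmatrix}\tau_k&\lambda_k\\ \lambda_k&\sum_{i\ne k}\mathrm{Tr}(\bar{\mathbf{H}}_k\mathbf{V}_i)+\mathrm{Tr}(\bar{\mathbf{H}}_k\boldsymbol{\Lambda})\end{bmatrix}\succeq 0$; (C13) $\omega\ge\sum_{k=1}^K\big[\log(1+\tau_k^{[n]})+\frac{\tau_k-\tau_k^{[n]}}{1+\tau_k^{[n]}}\big]$. No rank constraint is imposed (SDP relaxation). Lagrange multipliers and KKT conditions. Associate nonnegative multipliers $\psi_1$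 with (C1), $\psi_2$ with (C2), $\psi_3^k$ with (C4), $\psi_4^k$ with (C5), $\psi_5^{z,k}$ with (C6), $\psi_7^k$ with (C10), $\psi_9^l$ with (C9), positive semidefinite matrices $\boldsymbol{\Omega}_k$ with $\mathbf{V}_k\succeq 0$ ($k=0,\dots,K$), and, following the paper, nonnegative scalars $\psi_6^{z,k}$ and $\psi_8^k$ accounting for (C8) and (C12) through Lagrangian terms $\psi_6^{z,k}\big(\sum_{i\ne k}\mathrm{Tr}(\bar{\mathbf{H}}^e_z\mathbf{V}_i)+\mathrm{Tr}(\bar{\mathbf{H}}^e_z\boldsymbol{\Lambda})\big)$ and $\psi_8^k\big(\sum_{i\ne k}\mathrm{Tr}(\bar{\mathbf{H}}_k\mathbf{V}_i)+\mathrm{Tr}(\bar{\mathbf{H}}_k\boldsymbol{\Lambda})\big)$. For $k\in\mathcal{K}$ define $\mathbf{Y}_k=\psi_1\mathbf{I}+\sum_{i\ne k}(\psi_3^i-\psi_8^i)\bar{\mathbf{H}}_i+\sum_{z=1}^Z\big(\psi_5^{z,k}-\sum_{i\ne k}\psi_6^{z,i}\big)\bar{\mathbf{H}}^e_z+\psi_7^k\bar{\mathbf{H}}_k$. ''Optimal Lagrange multipliers'' are multipliers which, together with an optimal solution of $\mathcal{P}_n$, satisfy the KKT conditions, in particular: (K1) $\boldsymbol{\Omega}_0=\psi_2\mathbf{I}-\sum_{l=1}^L\psi_9^l\mathbf{G}_l$; (K2) $\boldsymbol{\Omega}_k=\mathbf{Y}_k-\psi_4^k\bar{\mathbf{H}}_k$,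 $k\in\mathcal{K}$; (K3) $\psi_9^l\big(\mathrm{Tr}(\mathbf{G}_l\mathbf{V}_0)-W_{mc}N_0(e^{\omega/\eta}-1)\big)=0$, $l\in\mathcal{L}$; (K4) $\boldsymbol{\Omega}_k\mathbf{V}_k=\mathbf{0}$, $k=0,\dots,K$; (K5) $\boldsymbol{\Omega}_k\succeq 0$, $k=0,\dots,K$. *)

(* Defs.v *)
(* Complex scalars: an arbitrary numClosedFieldType C
   (e.g. algC); real scalars are elements x of C with x \is Num.real. *)
From HB Require Import structures.
From mathcomp Require Import all_boot all_order all_algebra.
Set Implicit Arguments. Unset Strict Implicit. Unset Printing Implicit Defensive.
Import Order.TTheory GRing.Theory Num.Theory.
Local Open Scope ring_scope.

Section Defs.
Variable C : numClosedFieldType.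

Definition adj m n (A : 'M[C]_(m, n)) : 'M[C]_(n, m) := (map_mx Num.conj A)^T.

Definition psd n (A : 'M[C]_n) : Prop :=
  adj A = A /\ forall x : 'cV[C]_n, 0 <= (adj x *m A *m x) ord0 ord0.

Definition mx2 (a b c d : C) : 'M[C]_2 :=
  \matrix_(i < 2, j < 2)
    if (i : nat) == 0%N then (if (j : nat) == 0%N then a else b)
    else (if (j : nat) == 0%N then c else d).

Definition real (x : C) : Prop := x \is Num.real.

(* Problem data (including the iteration constants of iteration n). *)
Record data (N L K Z : nat) := Data {
  gv : 'I_L -> 'rV[C]_N;
  hv : 'I_K -> 'rV[C]_L;
  hev : 'I_Z -> 'rV[C]_L;
  Wmm : C; Wmc : C; N0 : C; PBS : C; PAC : C;
  betan : 'I_K -> C; epsn : 'I_K -> C; lamn : 'I_K -> C; taun : 'I_K -> C;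
  mun : 'I_K -> 'I_Z -> C;
  gamn : 'I_K -> 'I_Z -> C
}.

Definition data_ok N L K Z (d : data N L K Z) : Prop :=
  [/\ 0 < Wmm d, 0 < Wmc d, 0 < N0 d, 0 < PBS d & 0 < PAC d] /\
  (forall k, [/\ 0 < betan d k, 0 < epsn d k, real (lamn d k) & -1 < taun d k]) /\
  (forall k z, real (mun d k z) /\ -1 < gamn d k z).

Definition eta N L K Z (d : data N L K Z) : C := Wmc d / Wmm d.

Definition Gm N L K Z (d : data N L K Z) l : 'M[C]_N := adj (gv d l) *m gv d l.
Definition Hm N L K Z (d : data N L K Z) k : 'M[C]_L := adj (hv d k) *m hv d k.
Definition Hem N L K Z (d : data N L K Z) z : 'M[C]_L := adj (hev d z) *m hev d z.

Record point (N L K Z : nat) := Point {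
  V0 : 'M[C]_N;
  Vk : 'I_K -> 'M[C]_L;
  Lam : 'M[C]_L;
  eps : 'I_K -> C; beta : 'I_K -> C; tau : 'I_K -> C; theta : 'I_K -> C;
  lam : 'I_K -> C;
  gam : 'I_K -> 'I_Z -> C; zeta : 'I_K -> 'I_Z -> C; mu : 'I_K -> 'I_Z -> C;
  om : C
}.

Definition interf N L K Z (p : point N L K Z) (A : 'M[C]_L) (k : 'I_K) : C :=
  \sum_(i < K | i != k) \tr (A *m Vk p i) + \tr (A *m Lam p).

(* Feasibility of P_n; [ln] and [ex] play the role of the natural logarithm
   and exponential. *)
Definition feasible (ln ex : C -> C) N L K Z (d : data N L K Z)
    (p : point N L K Z) : Prop :=
  (forall k, [/\ real (eps p k), real (beta p k), real (tau p k),
                 real (theta p k) & real (lam p k)]) /\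
  (forall k z, [/\ real (gam p k z), real (zeta p k z) & real (mu p k z)]) /\
  real (om p) /\
  \sum_(k < K) \tr (Vk p k) + \tr (Lam p) <= PBS d /\
  \tr (V0 p) <= PAC d /\
  (psd (V0 p) /\ (forall k, psd (Vk p k)) /\ psd (Lam p)) /\
  (forall k, interf p (Hm d k) k + Wmm d * N0 d <= eps p k) /\
  (forall k, betan d k / (2 * epsn d k) * eps p k ^+ 2
                      + epsn d k / (2 * betan d k) * beta p k ^+ 2
                      <= \tr (Hm d k *m Vk p k)) /\
  (forall k z, \tr (Hem d z *m Vk p k) - gam p k z * Wmm d * N0 d
                        <= zeta p k z) /\
  (forall k z, zeta p k z <= 2 * mun d k z * mu p k z - mun d k z ^+ 2) /\
  (forall k z, psd (mx2 (gam p k z) (mu p k z) (mu p k z)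
                                 (interf p (Hem d z) k))) /\
  (forall l, Wmc d * N0 d * (ex (om p / eta d) - 1)
                      <= \tr (Gm d l *m V0 p)) /\
  (forall k, \tr (Hm d k *m Vk p k) - tau p k * Wmm d * N0 d
                       <= theta p k) /\
  (forall k, theta p k <= 2 * lamn d k * lam p k - lamn d k ^+ 2) /\
  (forall k, psd (mx2 (tau p k) (lam p k) (lam p k)
                                 (interf p (Hm d k) k))) /\
  \sum_(k < K) (ln (1 + taun d k) + (tau p k - taun d k) / (1 + taun d k))
              <= om p.

(* Objective of P_n; z0 is the eavesdropper index appearing in it. *)
Definition objective (ln : C -> C) N L K Z (d : data N L K Z) (z0 : 'I_Z)
    (p : point N L K Z) : C :=
  \sum_(k < K) Wmm d * (ln (1 + beta p k) - ln (1 + gamn d k z0)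
                        - (gam p k z0 - gamn d k z0) / (1 + gamn d k z0)).

Definition optimal (ln ex : C -> C) N L K Z (d : data N L K Z) (z0 : 'I_Z)
    (p : point N L K Z) : Prop :=
  feasible ln ex d p /\
  forall q, feasible ln ex d q -> objective ln d z0 q <= objective ln d z0 p.

Definition Ymx N L K Z (d : data N L K Z) (psi1 : C)
    (psi3 psi7 psi8 : 'I_K -> C) (psi5 psi6 : 'I_K -> 'I_Z -> C) (k : 'I_K)
    : 'M[C]_L :=
  psi1%:M + \sum_(i < K | i != k) (psi3 i - psi8 i) *: Hm d i
  + \sum_(z < Z) (psi5 k z - \sum_(i < K | i != k) psi6 i z) *: Hem d z
  + psi7 k *: Hm d k.

Definition replace N L K Z (p : point N L K Z) (k : 'I_K) (Vh Lh : 'M[C]_L)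
    : point N L K Z :=
  Point (V0 p) (fun i => if i == k then Vh else Vk p i) Lh
        (eps p) (beta p) (tau p) (theta p) (lam p)
        (gam p) (zeta p) (mu p) (om p).

End Defs.

(* Main.v *)
Require Import Defs.
From HB Require Import structures.
From mathcomp Require Import all_boot all_order all_algebra.
From mathcomp Require Import spectral sesquilinear.
From mathcomp Require Import ring.
From Stdlib Require Import Classical.
Set Implicit Arguments. Unset Strict Implicit. Unset Printing Implicit Defensive.
Import Order.TTheory GRing.Theory Num.Theory.
Local Open Scope ring_scope.

Section Aux.
Variable C : numClosedFieldType.

Lemma hadjE m n (A : 'M[C]_(m,n)) i j : adj A i j = (A j i)^*.
Proof. by rewrite /adj !mxE. Qed.

Lemma hadjK m n (A : 'M[C]_(m,n)) : adj (adj A) = A.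
Proof. by apply/matrixP=> i j; rewrite !hadjE conjCK. Qed.

Lemma hadjM m n p (A : 'M[C]_(m,n)) (B : 'M_(n,p)) : adj (A *m B) = adj B *m adj A.
Proof.
apply/matrixP=> i j; rewrite hadjE !mxE rmorph_sum; apply: eq_bigr => l _.
by rewrite !hadjE rmorphM mulrC.
Qed.

Lemma hadjD m n (A B : 'M[C]_(m,n)) : adj (A + B) = adj A + adj B.
Proof. by apply/matrixP=> i j; rewrite !mxE rmorphD. Qed.

Lemma hadjN m n (A : 'M[C]_(m,n)) : adj (- A) = - adj A.
Proof. by apply/matrixP=> i j; rewrite !mxE rmorphN. Qed.

Lemma hadjB m n (A B : 'M[C]_(m,n)) : adj (A - B) = adj A - adj B.
Proof. by rewrite hadjD hadjN. Qed.

Lemma hadjZ m n a (A : 'M[C]_(m,n)) : adj (a *: A) = a^* *: adj A.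
Proof. by apply/matrixP=> i j; rewrite !mxE rmorphM. Qed.

Lemma hadj0 m n : adj (0 : 'M[C]_(m,n)) = 0.
Proof. by apply/matrixP=> i j; rewrite !mxE rmorph0. Qed.

Lemma hadj_scalar n a : adj (a%:M : 'M[C]_n) = a^*%:M.
Proof.
by apply/matrixP=> i j; rewrite !mxE eq_sym rmorphMn.
Qed.

Lemma hadj11 (M : 'M[C]_1) : (adj M) 0 0 = (M 0 0)^*.
Proof. by rewrite hadjE. Qed.

Definition bf n (A : 'M[C]_n) (x y : 'cV[C]_n) := (adj x *m A *m y) 0 0.

Lemma bfDl n (A : 'M[C]_n) x1 x2 y : bf A (x1 + x2) y = bf A x1 y + bf A x2 y.
Proof. by rewrite /bf hadjD !mulmxDl mxE. Qed.
Lemma bfDr n (A : 'M[C]_n) x y1 y2 : bf A x (y1 + y2) = bf A x y1 + bf A x y2.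
Proof. by rewrite /bf !mulmxDr mxE. Qed.
Lemma bfNl n (A : 'M[C]_n) x y : bf A (- x) y = - bf A x y.
Proof. by rewrite /bf hadjN !mulNmx mxE. Qed.
Lemma bfNr n (A : 'M[C]_n) x y : bf A x (- y) = - bf A x y.
Proof. by rewrite /bf !mulmxN mxE. Qed.
Lemma bfBl n (A : 'M[C]_n) x1 x2 y : bf A (x1 - x2) y = bf A x1 y - bf A x2 y.
Proof. by rewrite bfDl bfNl. Qed.
Lemma bfBr n (A : 'M[C]_n) x y1 y2 : bf A x (y1 - y2) = bf A x y1 - bf A x y2.
Proof. by rewrite bfDr bfNr. Qed.
Lemma bfZl n (A : 'M[C]_n) a x y : bf A (a *: x) y = a^* * bf A x y.
Proof. by rewrite /bf hadjZ -!scalemxAl mxE. Qed.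
Lemma bfZr n (A : 'M[C]_n) a x y : bf A x (a *: y) = a * bf A x y.
Proof. by rewrite /bf -!scalemxAr mxE. Qed.

Lemma bf_conj n (A : 'M[C]_n) x y : adj A = A -> (bf A x y)^* = bf A y x.
Proof. by move=> hA; rewrite /bf -hadj11 !hadjM hadjK hA mulmxA. Qed.

Lemma normsq n (w : 'cV[C]_n) : (adj w *m w) 0 0 = \sum_i `|w i 0| ^+ 2.
Proof. by rewrite mxE; apply: eq_bigr => i _; rewrite hadjE normCKC. Qed.

Lemma normsq_ge0 n (w : 'cV[C]_n) : 0 <= (adj w *m w) 0 0.
Proof. by rewrite normsq sumr_ge0 // => i _; rewrite exprn_ge0. Qed.

Lemma normsq_eq0 n (w : 'cV[C]_n) : (adj w *m w) 0 0 = 0 -> w = 0.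
Proof.
rewrite normsq => /psumr_eq0P h; apply/matrixP => i j; rewrite ord1 mxE.
have /eqP := h (fun _ _ => exprn_ge0 _ (normr_ge0 _)) i isT.
by rewrite sqrf_eq0 normr_eq0 => /eqP.
Qed.


Lemma psd_null n (V : 'M[C]_n) x : psd V -> bf V x x = 0 -> V *m x = 0.
Proof.
move=> [hV hq] hx.
set w := V *m x.
set nn := (adj w *m w) 0 0.
set b := bf V w w.
have nx : bf V x w = nn by rewrite /bf /nn /w hadjM hV mulmxA.
have nw : bf V w x = nn by rewrite /bf -mulmxA.
have b0 : 0 <= b := hq w.
have n0 : 0 <= nn := normsq_ge0 w.
have := hq ((b+1) *: x - nn *: w).
rewrite -/(bf V _ _) bfBl !bfBr !bfZl !bfZr hx nx nw -/b.
rewrite (geC0_conj n0) geC0_conj; last by rewrite addr_ge0.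
rewrite [X in 0 <= X](_ : _ = - (nn ^+ 2 * (b + 2))); last by ring.
rewrite oppr_ge0 => H.
have H2 : nn ^+ 2 * (b + 2) = 0.
  by apply: le_anti; rewrite H mulr_ge0 ?exprn_ge0 ?addr_ge0.
move: H2 => /eqP; rewrite mulf_eq0 expf_eq0 /= => /orP[/eqP|].
  by move/normsq_eq0.
by rewrite gt_eqF // ltr_wpDl.
Qed.

Lemma psd_CS n (V : 'M[C]_n) x y : psd V ->
  0 <= bf V y y * (bf V y y * bf V x x - bf V y x * (bf V y x)^*).
Proof.
move=> [hV hq].
have := hq (bf V y y *: x - bf V y x *: y).
rewrite -/(bf V _ _) bfBl !bfBr !bfZl !bfZr -(bf_conj x y hV).
rewrite (geC0_conj (hq y)) -/(bf V y y).
rewrite conjCK => H; apply: (le_trans H); rewrite le_eqVlt; apply/orP; left; apply/eqP; ring.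
Qed.
 

End Aux.

Section Aux2.
Variable C : numClosedFieldType.
Local Open Scope sesquilinear_scope.

Lemma adj_tstar m n (A : 'M[C]_(m,n)) : adj A = A ^t* .
Proof. by rewrite /adj map_trmx. Qed.

Lemma spectral_split L (Y W : 'M[C]_L) : psd Y -> psd W -> Y *m W = 0 ->
  exists (m : nat) (U : 'M[C]_(L, m)) (a : 'I_m -> C),
    [/\ adj U *m U = 1%:M,
        (forall x : 'cV[C]_L, Y *m x = 0 <-> exists c : 'cV[C]_m, x = U *m c),
        (forall j, 0 <= a j)
      & W = \sum_(j < m) a j *: (col j U *m adj (col j U))].
Proof.
move=> hY hW hYW.
have hWY : W *m Y = 0 by rewrite -hY.1 -hW.1 -hadjM hYW hadj0.
set A := Y - W.
have hA : adj A = A by rewrite /A hadjB hY.1 hW.1.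
have An : A \is normalmx by apply/normalmxP; rewrite -adj_tstar hA.
have /orthomx_spectralP := An.
set P := spectralmx A; set sp := spectral_diag A => AE.
set Q := adj P.
have Pu : P *m Q = 1%:M by rewrite /Q adj_tstar; apply/unitarymxP/spectral_unitarymx.
have QhQ : adj Q *m Q = 1%:M by rewrite /Q hadjK.
have QQh : Q *m adj Q = 1%:M by apply: mulmx1C.
have AQ : A *m Q = Q *m diag_mx sp.
  rewrite AE invmx_unitary ?spectral_unitarymx // -adj_tstar -/Q.
  rewrite -!mulmxA. have -> : P *m Q = 1%:M by exact: Pu. by rewrite mulmx1.
pose q j := col j Q.
have eig j : A *m q j = sp 0 j *: q j.
  apply/matrixP => i k; rewrite ord1.
  transitivity ((A *m Q) i j); first by rewrite !mxE; apply: eq_bigr => l _; rewrite !mxE.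
  by rewrite AQ mul_mx_diag !mxE mulrC.
have orth i j : \sum_l (Q l i)^* * Q l j = (i == j)%:R.
  by have := congr1 (fun M : 'M[C]_L => M i j) QhQ; rewrite !mxE => <-; apply: eq_bigr => l _; rewrite !mxE.
have qq j : (adj (q j) *m q j) 0 0 = 1.
  transitivity (\sum_l (Q l j)^* * Q l j); last by rewrite orth eqxx.
  by rewrite !mxE; apply: eq_bigr => l _; rewrite !mxE.
have lamE j : sp 0 j = bf Y (q j) (q j) - bf W (q j) (q j).
  have : bf A (q j) (q j) = sp 0 j by rewrite /bf -mulmxA eig -scalemxAr mxE qq mulr1.
  by rewrite /A /bf mulmxBr mulmxBl !mxE => <-.
have lamR j : sp 0 j \is Num.real.
  by rewrite lamE realB // ger0_real // ?hY.2 ?hW.2.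
have eqY j : Y *m q j = W *m q j + sp 0 j *: q j.
  by rewrite -eig /A mulmxBl addrC subrK.
have caseneg j : sp 0 j <= 0 -> Y *m q j = 0 /\ W *m q j = (- sp 0 j) *: q j.
  move=> hl.
  have YY : Y *m (Y *m q j) = sp 0 j *: (Y *m q j).
    by rewrite [in LHS]eqY mulmxDr mulmxA hYW mul0mx add0r scalemxAr.
  have nr : (adj (Y *m q j) *m (Y *m q j)) 0 0 = sp 0 j * bf Y (q j) (q j).
    by rewrite hadjM hY.1 -mulmxA YY -scalemxAr mxE /bf mulmxA.
  have Yq0 : Y *m q j = 0.
    apply: normsq_eq0; apply: le_anti; rewrite normsq_ge0 andbT nr.
    by rewrite mulr_le0_ge0 // hY.2.
  split => //; move: (eqY j); rewrite Yq0 => /eqP; rewrite eq_sym addr_eq0 => /eqP ->.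
  by rewrite scaleNr.
have casepos j : ~~ (sp 0 j <= 0) -> [/\ 0 < sp 0 j, Y *m q j = sp 0 j *: q j & W *m q j = 0].
  move=> hl.
  have lt0 : 0 < sp 0 j by rewrite real_ltNge ?real0 ?lamR.
  have eqW : W *m q j = Y *m q j - sp 0 j *: q j by rewrite eqY addrK.
  have WW : W *m (W *m q j) = - sp 0 j *: (W *m q j).
    by rewrite [in LHS]eqW mulmxBr mulmxA hWY mul0mx sub0r -scalemxAr scaleNr.
  have nr : (adj (W *m q j) *m (W *m q j)) 0 0 = - sp 0 j * bf W (q j) (q j).
    by rewrite hadjM hW.1 -mulmxA WW -scalemxAr mxE /bf mulmxA.
  have Wq0 : W *m q j = 0.
    apply: normsq_eq0; apply: le_anti; rewrite normsq_ge0 andbT nr.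
    by rewrite mulNr oppr_le0 mulr_ge0 //; [exact: ltW | exact: hW.2].
  by do !split => //; rewrite eqY Wq0 add0r.
pose S := [set j | sp 0 j <= 0].
pose U : 'M[C]_(L, #|S|) := \matrix_(i, j) Q i (enum_val j).
have colU j : col j U = q (enum_val j) by apply/matrixP => i k; rewrite !mxE.
have inS (j : 'I_#|S|) : sp 0 (enum_val j) <= 0 by have := enum_valP j; rewrite inE.
exists #|S|, U, (fun j => - sp 0 (enum_val j)); split.
- apply/matrixP => a b; rewrite !mxE.
  transitivity (\sum_l (Q l (enum_val a))^* * Q l (enum_val b)).
    by apply: eq_bigr => l _; rewrite !mxE.
  by rewrite orth (inj_eq enum_val_inj).
- move=> x; split.
  + move=> Yx.
    set z := adj Q *m x.
    have zS l : l \notin S -> z l 0 = 0.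
      rewrite inE => /casepos [lp Yq _].
      have E : sp 0 l *: (adj (q l) *m x) = 0.
        by rewrite scalemxAl -(conj_Creal (lamR l)) -hadjZ -Yq hadjM hY.1 -mulmxA Yx mulmx0.
      have /eqP := congr1 (fun M : 'M[C]_1 => M 0 0) E.
      rewrite [X in X == _]mxE [X in _ == X]mxE mulf_eq0 (gt_eqF lp) /= => /eqP E2.
      rewrite -E2 /z !mxE; apply: eq_bigr => k _; by rewrite !mxE.
    pose c : 'cV[C]_#|S| := \col_j z (enum_val j) 0. exists c.
    have xE : x = Q *m z by rewrite /z mulmxA QQh mul1mx.
    rewrite {1}xE; apply/matrixP => i k; rewrite ord1.
    rewrite [LHS]mxE [RHS]mxE.
    rewrite (bigID (fun l => l \in S)) /= [X in _ + X]big1 ?addr0; last first.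
      by move=> l /zS ->; rewrite mulr0.
    by rewrite big_enum_val; apply: eq_bigr => j _; rewrite !mxE.
  + case=> c ->.
    have YU : Y *m U = 0.
      apply/matrixP => i j; rewrite mxE [RHS]mxE.
      have := congr1 (fun M : 'cV[C]_L => M i 0) (caseneg _ (inS j)).1.
      rewrite !mxE => H; rewrite -[RHS]H; apply: eq_bigr => l _; by rewrite /q !mxE.
    by rewrite mulmxA YU mul0mx.
- by move=> j; rewrite oppr_ge0.
have QQs : Q *m adj Q = \sum_l q l *m adj (q l).
  by apply/matrixP => i k; rewrite !mxE summxE; apply: eq_bigr => l _; rewrite !mxE big_ord1 !mxE.
rewrite -[LHS]mulmx1 -QQh QQs mulmx_sumr.
rewrite (bigID (fun l => l \in S)) /= [X in _ + X]big1 ?addr0; last first.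
  by move=> l; rewrite inE mulmxA => /casepos[_ _ ->]; rewrite mul0mx.
rewrite big_enum_val; apply: eq_bigr => j _.
by rewrite colU mulmxA (caseneg _ (inS j)).2 -scalemxAl.
Qed.
End Aux2.

Section Aux3.
Variable C : numClosedFieldType.

Lemma trB n (A B : 'M[C]_n) : \tr (A - B) = \tr A - \tr B.
Proof. by rewrite raddfB. Qed.

Lemma mx11_mul m (M : 'M[C]_(1,m)) (N : 'M[C]_(m,1)) (Q : 'M[C]_1) :
  (Q *m (M *m N)) 0 0 = Q 0 0 * (M *m N) 0 0.
Proof. by rewrite mxE big_ord1. Qed.

Lemma entryB m n (A B : 'M[C]_(m,n)) i j : (A - B) i j = A i j - B i j.
Proof. by rewrite !mxE. Qed.
Lemma entryZ m n a (A : 'M[C]_(m,n)) i j : (a *: A) i j = a * A i j.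
Proof. by rewrite !mxE. Qed.

Lemma quad_outer n (x u : 'cV[C]_n) :
  (adj x *m (u *m adj u) *m x) 0 0 = (adj x *m u) 0 0 * (adj u *m x) 0 0.
Proof. by rewrite !mulmxA -(mulmxA (adj x *m u)) mx11_mul. Qed.

Lemma psdD n (A B : 'M[C]_n) : psd A -> psd B -> psd (A + B).
Proof.
move=> [hA qA] [hB qB]; split; first by rewrite hadjD hA hB.
by move=> x; rewrite mulmxDr mulmxDl mxE addr_ge0.
Qed.

Lemma psdZ n a (A : 'M[C]_n) : 0 <= a -> psd A -> psd (a *: A).
Proof.
move=> a0 [hA qA]; split; first by rewrite hadjZ hA geC0_conj.
by move=> x; rewrite -scalemxAr -scalemxAl mxE mulr_ge0.
Qed.

Lemma psd_outer n (u : 'cV[C]_n) : psd (u *m adj u).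
Proof.
split; first by rewrite hadjM hadjK.
move=> x; rewrite mulmxA -mulmxA mx11_mul -[adj x *m u]hadjK hadjM hadjK hadj11.
by rewrite mulrC mul_conjC_ge0.
Qed.

Lemma tr_outer n (h : 'rV[C]_n) (M : 'M_n) : \tr (adj h *m h *m M) = (h *m M *m adj h) 0 0.
Proof. by rewrite -mulmxA mxtrace_mulC /mxtrace big_ord1. Qed.

Lemma mx2_psd (a b dd e : C) : psd (mx2 a b b dd) -> 0 <= e -> psd (mx2 a b b (dd + e)).
Proof.
move=> hM he.
pose v : 'rV[C]_2 := \row_(j < 2) ((j : nat) == 1%N)%:R.
have -> : mx2 a b b (dd + e) = mx2 a b b dd + e *: (adj v *m v).
  apply/matrixP => i j; rewrite !mxE big_ord1 !mxE.
  case: i => [[|[|i]] hi] //; case: j => [[|[|j]] hj] //=.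
  1-4: by rewrite ?rmorph0 ?rmorph1; ring.
by apply: psdD => //; apply: psdZ => //; rewrite -[X in _ *m X]hadjK; apply: psd_outer.
Qed.

Lemma key_y L (V : 'M[C]_L) (h : 'rV[C]_L) (Om : 'M_L) (y : 'cV_L) :
  psd V -> V *m y != 0 -> (h *m V = 0 \/ y = adj h) -> Om *m V = 0 ->
  exists Vh : 'M_L,
    [/\ psd Vh, \rank Vh = 1%N, psd (V - Vh), h *m Vh = h *m V & Om *m Vh = 0].
Proof.
move=> hV hy hor hO.
set c := bf V y y.
set u := V *m y.
have cge : 0 <= c := hV.2 y.
have c0 : 0 < c.
  rewrite lt_def cge andbT; apply/eqP => H0; move: hy.
  by rewrite (psd_null hV H0) eqxx.
have cn0 : c != 0 by rewrite gt_eqF.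
exists (c^-1 *: (u *m adj u)); split.
- by apply: psdZ; [rewrite invr_ge0 ltW | exact: psd_outer].
- rewrite mxrank_scale_nz ?invr_eq0 //; apply/eqP; rewrite eqn_leq; apply/andP; split.
    exact: leq_trans (mxrankM_maxl _ _) (rank_leq_col u).
  rewrite lt0n mxrank_eq0; apply/eqP => H0.
  have : \tr (u *m adj u) = 0 by rewrite H0 mxtrace0.
  rewrite mxtrace_mulC /mxtrace big_ord1 => /normsq_eq0 /eqP.
  by apply/negP.
- split.
    by rewrite hadjB hV.1 hadjZ hadjM hadjK geC0_conj // invr_ge0 ltW.
  move=> x.
  set be := bf V y x.
  have e1 : (adj x *m (V - c^-1 *: (u *m adj u)) *m x) 0 0
            = bf V x x - c^-1 * (be^* * be).
    change (bf (V - c^-1 *: (u *m adj u)) x x = bf V x x - c^-1 * (be^* * be)).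
    rewrite /bf mulmxBr mulmxBl entryB -scalemxAr -scalemxAl entryZ; congr (_ - _ * _).
    rewrite quad_outer; congr (_ * _).
      by rewrite /u mulmxA -/(bf V x y) -(bf_conj y x hV.1).
    by rewrite /u hadjM hV.1.
  rewrite e1.
  have cs := psd_CS x y hV.
  have cs2 : 0 <= c * bf V x x - be * be^* by rewrite -(pmulr_rge0 _ c0).
  rewrite (_ : _ - _ = c^-1 * (c * bf V x x - be * be^*)).
    by rewrite mulr_ge0 // invr_ge0 ltW.
  by field.
- have hu : h *m (c^-1 *: (u *m adj u)) = c^-1 *: ((h *m u) *m adj u).
    by rewrite -scalemxAr mulmxA.
  rewrite hu; case: hor => [hV0|yE].
    by rewrite /u mulmxA hV0 !mul0mx scaler0.
  have hc : h *m u = c%:M.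
    by rewrite (mx11_scalar (h *m u)); congr (_%:M); rewrite /u /c /bf yE hadjK mulmxA.
  rewrite hc mul_scalar_mx scalerA mulVf // scale1r /u yE hadjM hadjK hV.1.
  by [].
- by rewrite -scalemxAr mulmxA /u mulmxA hO !mul0mx scaler0.
Qed.

Lemma key L (V : 'M[C]_L) (h : 'rV[C]_L) (Om : 'M_L) :
  psd V -> V != 0 -> Om *m V = 0 ->
  exists Vh : 'M_L,
    [/\ psd Vh, \rank Vh = 1%N, psd (V - Vh), h *m Vh = h *m V & Om *m Vh = 0].
Proof.
move=> hV Vn hO.
case: (boolP (V *m adj h == 0)) => [/eqP Vh0|Vh]; last first.
  exact: key_y hV Vh (or_intror erefl) hO.
have hV0 : h *m V = 0 by rewrite -[h]hadjK -hV.1 -hadjM Vh0 hadj0.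
have [y hy] : exists y : 'cV[C]_L, V *m y != 0.
  apply: NNPP => hn; move/negP: Vn; apply; apply/eqP/matrixP => i j.
  have E : V *m (delta_mx j 0 : 'cV[C]_L) = 0.
    apply: NNPP => H; apply: hn; exists (delta_mx j 0); apply/negP => /eqP H2; exact: H H2.
  move: (congr1 (fun M : 'cV[C]_L => M i 0) E); rewrite -colE !mxE => ->.
  by [].  
exact: key_y hV hy (or_introl hV0) hO.
Qed.

End Aux3.

Lemma interf_rep (C : numClosedFieldType) N L K Z (p : point C N L K Z) k Vh W
  (A : 'M_L) j :
  Vk p k - Vh = W ->
  interf (replace p k Vh (Lam p + W)) A j
  = interf p A j + (if j == k then \tr (A *m W) else 0).
Proof.
move=> hW; rewrite /interf /= mulmxDr mxtraceD.
case: eqP => [->|/eqP jk].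
  rewrite addrA; congr (_ + _ + _); apply: eq_bigr => i /negbTE -> //.
rewrite addr0 (bigD1 k) /=; last by rewrite eq_sym.
rewrite [in RHS](bigD1 k) /=; last by rewrite eq_sym.
rewrite eqxx (eq_bigr (fun i => \tr (A *m Vk p i))); last first.
  by move=> i /andP[_ /negbTE ->].
rewrite -hW mulmxBr trB; ring.
Qed.

(* psi5 k z stands for psi_5^{z,k}, psi6 k z for psi_6^{z,k}. *)
Theorem mainTheorem3 (C : numClosedFieldType) (ln ex : C -> C)
    (N L K Z : nat) (HN : (0 < N)%N) (HL : (0 < L)%N) (HK : (0 < K)%N)
    (HZ : (0 < Z)%N)
    (d : data C N L K Z) (Hd : data_ok d) (z0 : 'I_Z)
    (p : point C N L K Z) (Hopt : optimal ln ex d z0 p)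
    (psi1 psi2 : C) (psi3 psi4 psi7 psi8 : 'I_K -> C)
    (psi5 psi6 : 'I_K -> 'I_Z -> C) (psi9 : 'I_L -> C)
    (Omega0 : 'M[C]_N) (Omega : 'I_K -> 'M[C]_L)
    (Hpsi : [/\ 0 <= psi1, 0 <= psi2, (forall l, 0 <= psi9 l)
              & forall k, [/\ 0 <= psi3 k, 0 < psi4 k, 0 <= psi7 k, 0 <= psi8 k
                            & (forall z, 0 <= psi5 k z /\ 0 <= psi6 k z)]])
    (HK2 : forall k, Omega k = Ymx d psi1 psi3 psi7 psi8 psi5 psi6 k - psi4 k *: Hm d k)
    (HK4 : Omega0 *m V0 p = 0 /\ forall k, Omega k *m Vk p k = 0)
    (HK5 : psd Omega0 /\ forall k, psd (Omega k))
    (k : 'I_K) (Hrank : (1 < \rank (Vk p k))%N) :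
  exists Vh : 'M[C]_L,
    [/\ psd Vh /\ \rank Vh = 1%N, psd (Vk p k - Vh),
        feasible ln ex d (replace p k Vh (Lam p + (Vk p k - Vh))),
        objective ln d z0 (replace p k Vh (Lam p + (Vk p k - Vh)))
          = objective ln d z0 p
      & (exists (m : nat) (U : 'M[C]_(L, m)) (a : 'I_m -> C),
          [/\ adj U *m U = 1%:M,
              (forall x : 'cV[C]_L,
                 Ymx d psi1 psi3 psi7 psi8 psi5 psi6 k *m x = 0
                 <-> exists c : 'cV[C]_m, x = U *m c),
              (forall j, 0 <= a j)
            & (Vk p k - Vh = \sum_(j < m) a j *: (col j U *m adj (col j U)))])].
Proof.
have [Hfeas _] := Hopt.
move: Hfeas => [hsc [hsc2 [hom [hC1 [hC2 [[hpV0 [hpVk hpLam]] [hC4 [hC5 [hC6 [hC7 [hC8 [hC9 [hC10 [hC11 [hC12 hC13]]]]]]]]]]]]]]].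
have Vnz : Vk p k != 0 by apply: contraTneq Hrank => ->; rewrite mxrank0.
have [Vh [pVh rVh pW hVh OVh]] := key (hv d k) (hpVk k) Vnz (HK4.2 k).
set W := Vk p k - Vh.
have hW0 : hv d k *m W = 0 by rewrite mulmxBr hVh subrr.
have HW0 : Hm d k *m W = 0 by rewrite /Hm -mulmxA hW0 mulmx0.
have HVh : Hm d k *m Vh = Hm d k *m Vk p k.
  by apply/eqP; rewrite eq_sym -subr_eq0 -mulmxBr HW0.
have tHk : \tr (Hm d k *m W) = 0 by rewrite HW0 mxtrace0.
have tHe z : 0 <= \tr (Hem d z *m W).
  by rewrite /Hem tr_outer -[X in X *m W *m _]hadjK; exact: pW.2.
have tHeVh z : \tr (Hem d z *m Vh) <= \tr (Hem d z *m Vk p k).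
  by rewrite -subr_ge0 -trB -mulmxBr; exact: tHe.
have Yeq : Ymx d psi1 psi3 psi7 psi8 psi5 psi6 k = Omega k + psi4 k *: Hm d k.
  by rewrite HK2 subrK.
have [_ _ _ /(_ k) [_ p4 _ _ _]] := Hpsi.
have pY : psd (Ymx d psi1 psi3 psi7 psi8 psi5 psi6 k).
  rewrite Yeq; apply: psdD; first exact: HK5.2.
  apply: psdZ; first exact: ltW.
  by rewrite /Hm -[X in _ *m X]hadjK; exact: psd_outer.
have YW : Ymx d psi1 psi3 psi7 psi8 psi5 psi6 k *m W = 0.
  by rewrite Yeq mulmxDl -scalemxAl HW0 scaler0 addr0 mulmxBr (HK4.2 k) OVh subrr.
have [m [U [a [U1 UY a0 WE]]]] := spectral_split pY pW YW.
have hWd : Vk p k - Vh = W by [].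
pose p' := replace p k Vh (Lam p + W).
have Vk' i : Vk p' i = if i == k then Vh else Vk p i by [].
exists Vh; split => //; last by exists m, U, a.
split; first exact: hsc.
split; first exact: hsc2.
split; first exact: hom.
split.
  apply: le_trans hC1; rewrite le_eqVlt; apply/orP; left; apply/eqP.
  rewrite (bigD1 k) //= [in RHS](bigD1 k) //= eqxx.
  rewrite (eq_bigr (fun i => \tr (Vk p i))); last by move=> i /negbTE ->.
  by rewrite mxtraceD /W trB; ring.
split; first exact: hC2.
split.
  split; first exact: hpV0.
  split; last exact: psdD.
  by move=> i; rewrite Vk'; case: (i == k).
split.
  move=> j; rewrite (interf_rep _ _ hWd); case: eqP => [->|_].
    by rewrite tHk addr0; exact: hC4.
  by rewrite addr0; exact: hC4.
split.
  move=> j; rewrite Vk'; case: eqP => [->|_]; last exact: hC5.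
  by rewrite HVh; exact: hC5.
split.
  move=> j z; apply: le_trans (hC6 j z); rewrite lerD2r Vk'.
  by case: eqP => [->|_] //.
split; first exact: hC7.
split.
  move=> j z; rewrite (interf_rep _ _ hWd); case: eqP => [->|_].
    exact: mx2_psd (hC8 k z) (tHe z).
  by rewrite addr0; exact: hC8.
split; first exact: hC9.
split.
  move=> j; rewrite Vk'; case: eqP => [->|_]; last exact: hC10.
  by rewrite HVh; exact: hC10.
split; first exact: hC11.
split; last exact: hC13.
move=> j; rewrite (interf_rep _ _ hWd); case: eqP => [->|_].
  by rewrite tHk addr0; exact: hC12.
by rewrite addr0; exact: hC12.
Qed.
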